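(* Let $\mathcal{H}$ be a finite set of hypotheses, $\mathcal{T}$ a finite set of tests, $\mathcal{O}$ a finite set of outcomes, each $h\in\mathcal{H}$ a function $h:\mathcal{T}\to\mathcal{O}$, and $\mathcal{R}$ a finite nonempty collection of decision regions $r\subseteq\mathcal{H}$ with $\bigcup_{r\in\mathcal{R}} r=\mathcal{H}$. Let $\mathcal{G}$ be the set of subregions, let $$k=\min\Big(\max_{h\in\mathcal{H}}|\{r\in\mathcal{R}: h\in r\}|,\ \max_{r\in\mathcal{R}}|\{g\in\mathcal{G}: g\subseteq r\}|\Big)+1,$$ and let $\mathcal{E}$ be the set of all multisets $e$ of exactly $k$ subregions (repetitions allowed) such that there is no $r\in\mathcal{R}$ with $g\subseteq r$ for every $g\in e$. For a set of test–outcome pairs $\mathcal{S}\subseteq\mathcal{T}\times\mathcal{O}$, let $\mathcal{V}(\mathcal{S})=\{h\in\mathcal{H}: h(t)=o \text{ for all }(t,o)\in\mathcal{S}\}$ and let $\mathcal{E}(\mathcal{S})$ be the set of hyperedges $e\in\mathcal{E}$ such that every subregion $g\in e$ contains at least one hypothesis of $\mathcal{V}(\mathcal{S})$. Then for every $\mathcal{S}\subseteq\mathcal{T}\times\mathcal{O}$, $$\mathcal{E}(\mathcal{S})=\emptyset \iff \exists\, r\in\mathcal{R}:\ \mathcal{V}(\mathcal{S})\subseteq r.$$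
   Context: Subregions: hypotheses $h,h'$ are grouped into the same subregion iff they belong to exactly the same decision regions (for all $r\in\mathcal{R}$: $h\in r\Leftrightarrow h'\in r$); $\mathcal{G}$ is the set of these equivalence classes, and for $g\in\mathcal{G}$, $r\in\mathcal{R}$ we write $g\subseteq r$ if every hypothesis of $g$ lies in $r$. The hyperedges $\mathcal{E}$ form the ''splitting hypergraph'' on the node set $\mathcal{G}$; a hyperedge is ''cut'' by evidence $\mathcal{S}$ when it is not in $\mathcal{E}(\mathcal{S})$. *)

(* Defs.v *)
From mathcomp Require Import all_boot.
Set Implicit Arguments. Unset Strict Implicit. Unset Printing Implicit Defensive.

Section Defs.
Variables (T O : finType).
Notation hyp := {ffun T -> O}.

Definition subregion_of (H : {set hyp}) (R : {set {set hyp}}) (h : hyp)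
  : {set hyp} :=
  [set h' in H | [forall r in R, (h \in r) == (h' \in r)]].

Definition subregions (H : {set hyp}) (R : {set {set hyp}}) : {set {set hyp}} :=
  [set subregion_of H R h | h in H].

Definition hyperedge_size (H : {set hyp}) (R : {set {set hyp}}) : nat :=
  minn (\max_(h in H) #|[set r in R | h \in r]|)
       (\max_(r in R) #|[set g in subregions H R | g \subset r]|) + 1.

(* multisets of subregions: multiplicity functions; g \in e iff 0 < e g *)
Definition mset_subr := {ffun {set hyp} -> nat}.

Definition is_hyperedge (H : {set hyp}) (R : {set {set hyp}}) (e : mset_subr)
  : Prop :=
  [/\ forall g, 0 < e g -> g \in subregions H R,
      \sum_g e g = hyperedge_size H R
    & ~ (exists2 r, r \in R & forall g, 0 < e g -> g \subset r)].

Definition version_space (H : {set hyp}) (S : {set T * O}) : {set hyp} :=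
  [set h in H | [forall p in S, h p.1 == p.2]].

Definition in_E_of (H : {set hyp}) (R : {set {set hyp}}) (S : {set T * O})
  (e : mset_subr) : Prop :=
  is_hyperedge H R e /\
  (forall g, 0 < e g -> exists2 h, h \in version_space H S & h \in g).

End Defs.

(* Main.v *)
Require Import Defs.
From mathcomp Require Import all_boot.
Set Implicit Arguments. Unset Strict Implicit.

Section Aux.
Variables (T O : finType).
Notation hyp := {ffun T -> O}.
Variables (H : {set hyp}) (R : {set {set hyp}}).

Lemma sub_self h : h \in H -> h \in subregion_of H R h.
Proof. by move=> hH; rewrite inE hH /=; apply/forall_inP => r _. Qed.

Lemma sub_in h x r : x \in subregion_of H R h -> r \in R ->
  (h \in r) = (x \in r).
Proof. by rewrite inE => /andP[_ /forall_inP F] rR; apply/eqP/F. Qed.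

Lemma sub_subset h x r : h \in H -> x \in subregion_of H R h -> r \in R ->
  (subregion_of H R h \subset r) = (x \in r).
Proof.
move=> hH xg rR; rewrite -(sub_in xg rR); apply/idP/idP.
  by move/subsetP; apply; apply: sub_self.
by move=> hr; apply/subsetP=> y yg; rewrite -(sub_in yg rR).
Qed.

Lemma subregionsP g : g \in subregions H R ->
  exists2 h, h \in H & g = subregion_of H R h.
Proof. by rewrite /subregions => /imsetP[h hH ->]; exists h. Qed.
End Aux.

Theorem theorem1 (T O : finType) (H : {set {ffun T -> O}})
    (R : {set {set {ffun T -> O}}})
    (HR_sub : forall r, r \in R -> r \subset H)
    (HR_ne : R != set0)
    (HR_cover : \bigcup_(r in R) r = H)
    (S : {set T * O}) :
  (forall e, ~ in_E_of H R S e) <->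
  (exists2 r, r \in R & version_space H S \subset r).
Proof.
set V := version_space H S.
have VH : V \subset H by apply/subsetP=> h; rewrite inE => /andP[].
split; last first.
  move=> [r rR Vr] e [[esub _ enot] emeet]; apply: enot; exists r => // g eg.
  have [x xV xg] := emeet g eg.
  have [h hH gE] := subregionsP (esub g eg); rewrite gE in xg *.
  by rewrite (sub_subset hH xg rR); apply: (subsetP Vr).
move=> noE.
case: (boolP [exists r in R, V \subset r]) => [/exists_inP[r rR Vr]|nV].
  by exists r.
exfalso.
set sub := subregion_of H R.
set GV := [set sub h | h in V].
pose P (F : {set {set {ffun T -> O}}}) :=
  (F \subset GV) && ~~ [exists r in R, [forall g in F, g \subset r]].
have PGV : P GV.
  rewrite /P subxx /=; apply/negP => /exists_inP[r rR /forall_inP A].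
  case/negP: nV; apply/exists_inP; exists r => //; apply/subsetP=> h hV.
  have hH := subsetP VH h hV.
  rewrite -(sub_subset hH (@sub_self _ _ H R _ hH) rR); apply: A.
  by apply/imsetP; exists h.
case: (@arg_minnP _ _ P (fun F : {set {set {ffun T -> O}}} => #|F|) PGV) => F /andP[FGV notc] Fmin.
have FsubG g : g \in F -> exists2 h, h \in V & g = sub h.
  by move=> gF; case/imsetP: (subsetP FGV g gF) => h hV ->; exists h.
have rem g : g \in F -> exists2 r, r \in R & [forall g' in F :\ g, g' \subset r].
  move=> gF; suff /exists_inP[r rR A] : [exists r in R, [forall g' in F :\ g, g' \subset r]].
    by exists r.
  case: (boolP [exists r in R, [forall g' in F :\ g, g' \subset r]]) => // nc.
  have : P (F :\ g) by rewrite /P nc andbT; apply: subset_trans FGV; apply: subsetDl.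
  move/Fmin; rewrite (cardsD1 g F) gF; by rewrite ltnn.
have [g0 g0F] : exists g0, g0 \in F.
  apply/set0Pn; apply/negP => /eqP F0; case/negP: notc.
  case/set0Pn: HR_ne => r rR; apply/exists_inP; exists r => //.
  by apply/forall_inP=> g; rewrite F0 inE.
pose f g := odflt set0 [pick r in R | [forall g' in F :\ g, g' \subset r]].
have fP g : g \in F -> f g \in R /\ [forall g' in F :\ g, g' \subset f g].
  move=> gF; rewrite /f; case: pickP => [r /andP[-> ->] //|/= none].
  by have [r rR A] := rem g gF; move: (none r); rewrite rR A.
set k := hyperedge_size H R.
have cardF : #|F| <= k.
  rewrite /k /hyperedge_size addn1 (cardsD1 g0 F) g0F add1n ltnS leq_min.
  apply/andP; split.
  - have [h0 h0V g0E] := FsubG g0 g0F.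
    have h0H := subsetP VH h0 h0V.
    apply: (leq_trans _ (@leq_bigmax_cond _ (fun h => h \in H) (fun h => #|[set r in R | h \in r]|) h0 h0H)).
    rewrite -(@card_in_imset _ _ f (mem (F :\ g0))).
      apply: subset_leq_card; apply/subsetP => r /imsetP[g].
      move=> /setD1P[gg0 gF] ->; have [fR fA] := fP g gF.
      rewrite inE fR /=.
      have : g0 \subset f g by apply: (forall_inP fA); rewrite !inE eq_sym gg0.
      by move/subsetP; apply; rewrite g0E; apply: sub_self.
    move=> g g' /setD1P[_ gF] /setD1P[_ g'F] fe; apply/eqP/negPn/negP => gg'.
    case/negP: notc; apply/exists_inP; exists (f g); first by case: (fP g gF).
    apply/forall_inP => x xF; case: (eqVneq x g) => [->|xg].
      by rewrite fe; case: (fP g' g'F) => _ /forall_inP; apply; rewrite !inE gg' gF.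
    by case: (fP g gF) => _ /forall_inP; apply; rewrite !inE xg xF.
  - have [fR fA] := fP g0 g0F.
    apply: (leq_trans _ (@leq_bigmax_cond _ (fun r => r \in R)
       (fun r => #|[set g in subregions H R | g \subset r]|) _ fR)).
    apply: subset_leq_card; apply/subsetP => g gF; rewrite inE (forall_inP fA _ gF) andbT.
    move: gF => /setD1P[_ gF]; have [h hV ->] := FsubG g gF.
    by apply/imsetP; exists h => //; apply: (subsetP VH).
pose e : mset_subr T O :=
  [ffun g => nat_of_bool (g \in F) + (g == g0) * (k - #|F|)].
have eP g : (0 < e g) = (g \in F).
  rewrite ffunE; case: (boolP (g \in F)) => //= gF.
  by case: (eqVneq g g0) => [E|]; [rewrite E g0F in gF|].
apply: (noE e); split; [split|].
- move=> g; rewrite eP => gF; have [h hV ->] := FsubG g gF.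
  by apply/imsetP; exists h => //; apply: (subsetP VH).
- rewrite (eq_bigr (fun g => nat_of_bool (g \in F) + (g == g0) * (k - #|F|)));
    last by move=> g _; rewrite ffunE.
  rewrite big_split /=.
  rewrite (eq_bigr (fun g => if g \in F then 1 else 0)); last by move=> g _; case: (g \in F).
  rewrite -big_mkcond sum1_card (bigD1 g0) //= eqxx mul1n big1 ?addn0.
    by rewrite subnKC.
  by move=> g /negbTE ->.
- move=> [r rR A]; case/negP: notc; apply/exists_inP; exists r => //.
  by apply/forall_inP => g gF; apply: A; rewrite eP.
- move=> g; rewrite eP => gF; have [h hV ->] := FsubG g gF.
  by exists h => //; apply: sub_self; apply: (subsetP VH).
Qed.
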